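(* For an integer $k\ge 1$ let $\ell(k)=s+1$, where $s\ge 0$ is the exponent of $2$ in the prime factorization of $k$ (so $k/2^s$ is odd), and let $r_k=\sum_{i=1}^k \ell(i)$ (so $r_1=1$ and $r_k=r_{k-1}+\ell(k)$). Then for every integer $m\ge 1$ the set $\{r_n: n\in\mathbb{N},\ \ell(n)=m\}$ has strictly positive lower density in $\mathbb{N}$, i.e. $\liminf_{N\to\infty}\frac{1}{N}\,\bigl|\{r_n: \ell(n)=m\}\cap\{1,\dots,N\}\bigr|>0$. *)

(* Defs.v *)
From mathcomp Require Import all_boot.
Set Implicit Arguments. Unset Strict Implicit. Unset Printing Implicit Defensive.

Definition ell (k : nat) : nat := (logn 2 k).+1.

Definition r (k : nat) : nat := \sum_(1 <= i < k.+1) ell i.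

(* membership of x in the set { r_n : n >= 1, ell n = m }.
   Since r n >= n, any witness n satisfies n <= x, so the search is bounded
   (the bound is exact, not a restriction). *)
Definition inRset (m x : nat) : bool :=
  [exists n : 'I_x.+1, (0 < (n : nat)) && (ell n == m) && (r n == x)].

Definition countR (m N : nat) : nat := \sum_(1 <= x < N.+1) inRset m x.

(* Main.v *)
Require Import Defs.
From mathcomp Require Import all_boot.
From mathcomp Require Import zify.

Definition S (n : nat) : nat := \sum_(1 <= i < n.+1) logn 2 i.

Lemma SS n : S n.+1 = S n + logn 2 n.+1.
Proof. by rewrite /S big_nat_recr. Qed.

Lemma rS n : r n.+1 = r n + ell n.+1.
Proof. by rewrite /r big_nat_recr. Qed.

Lemma r_eq n : r n = n + S n.
Proof.
elim: n => [|n IH]; first by rewrite /r /S !big_geq.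
rewrite rS SS IH /ell; lia.
Qed.

Lemma logn_odd k : logn 2 k.*2.+1 = 0.
Proof. by rewrite logn_coprime // coprime2n /= odd_double. Qed.

Lemma logn_even k : logn 2 k.+1.*2 = (logn 2 k.+1).+1.
Proof. by rewrite -muln2 mulnC lognM //; have -> : logn 2 2 = 1 by []; lia. Qed.

Lemma S_double n : S n.*2 = n + S n.
Proof.
elim: n => [|n IH]; first by rewrite /S big_geq.
rewrite doubleS SS SS IH logn_odd.
have -> : (n.*2).+2 = n.+1.*2 by rewrite doubleS.
rewrite logn_even SS; lia.
Qed.

Lemma S_le n : S n <= n.
Proof.
elim/ltn_ind: n => n IH.
rewrite -(odd_double_half n).
case: (odd n) => /=.
- rewrite add1n SS logn_odd S_double addn0.
  case: (posnP n./2) => [->|hp]; first by rewrite /S big_geq.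
  have := IH n./2; rewrite -{2}(odd_double_half n) => H.
  have : n./2 < odd n + n./2.*2 by lia.
  move/H; lia.
- rewrite add0n S_double.
  case: (posnP n./2) => [->|hp]; first by rewrite /S big_geq.
  have := IH n./2; rewrite -{2}(odd_double_half n) => H.
  have : n./2 < odd n + n./2.*2 by lia.
  move/H; lia.
Qed.

Lemma r_le n : r n <= n.*2.
Proof. rewrite r_eq; have := S_le n; lia. Qed.

Lemma countRS m N : countR m N.+1 = countR m N + inRset m N.+1.
Proof. by rewrite /countR big_nat_recr. Qed.

Lemma countR_mono m N k : countR m N <= countR m (N + k).
Proof. elim: k => [|k IH]; rewrite ?addn0 // addnS countRS; lia. Qed.

Lemma countR_mono' m N M : N <= M -> countR m N <= countR m M.
Proof. move=> H; rewrite -(subnKC H); exact: countR_mono. Qed.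

Definition cnt m n := \sum_(1 <= i < n.+1) (ell i == m).

Lemma cntS m n : cnt m n.+1 = cnt m n + (ell n.+1 == m).
Proof. by rewrite /cnt big_nat_recr. Qed.

Lemma inR_r m n : 0 < n -> ell n = m -> inRset m (r n).
Proof.
move=> n0 hm; have hn : n < (r n).+1 by rewrite r_eq; lia.
apply/existsP; exists (Ordinal hn) => /=.
by rewrite n0 hm !eqxx.
Qed.

Lemma countR_r m n : cnt m n <= countR m (r n).
Proof.
elim: n => [|n IH]; first by rewrite /cnt big_geq.
rewrite cntS rS.
have -> : r n + ell n.+1 = (r n + logn 2 n.+1).+1 by rewrite /ell addnS.
rewrite countRS -addnS.
have h1 := countR_mono m (r n) (logn 2 n.+1).
case: eqP => [hm|_]; last by lia.
have := @inR_r m n.+1 (ltn0Sn n) hm; rewrite rS /ell addnS => ->; lia.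
Qed.

Lemma cnt_mono m N k : cnt m N <= cnt m (N + k).
Proof. elim: k => [|k IH]; rewrite ?addn0 // addnS cntS; lia. Qed.

Lemma cnt_mono' m N M : N <= M -> cnt m N <= cnt m M.
Proof. move=> H; rewrite -(subnKC H); exact: cnt_mono. Qed.

Lemma ell_q m j : 1 <= m -> ell (2 ^ m.-1 * j.*2.+1) = m.
Proof.
move=> hm; rewrite /ell lognM ?expn_gt0 // lognX logn_odd; have -> : logn 2 2 = 1 by []; lia.
Qed.

Lemma cnt_lb m J : 1 <= m -> J <= cnt m (2 ^ m * J).
Proof.
move=> hm; elim: J => [|J IH]; first by [].
set q := 2 ^ m.-1.
have hq : 2 ^ m = q.*2 by rewrite /q -muln2 -expnSr; congr (2 ^ _); lia.
have hq0 : 0 < q by rewrite expn_gt0.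
have hmid : 2 ^ m * J < q * J.*2.+1 by rewrite hq; nia.
have hle : q * J.*2.+1 <= 2 ^ m * J.+1 by rewrite hq; nia.
have e : q * J.*2.+1 = (q * J.*2.+1).-1.+1 by lia.
have h1 := @cnt_mono' m _ _ hle.
have h2 : cnt m (2 ^ m * J) <= cnt m (q * J.*2.+1).-1 by apply: cnt_mono'; lia.
move: h1; rewrite e cntS -e ell_q // eqxx; lia.
Qed.

Theorem lemma3p4 (m : nat) : 1 <= m ->
  exists a b N0 : nat, [/\ 0 < a, 0 < b &
    forall N : nat, N0 <= N -> a * N <= b * countR m N].
Proof.
move=> hm.
set d := 2 ^ m.+1.
have hd : 0 < d by rewrite expn_gt0.
exists 1, (d.*2), d; split => //; first by rewrite double_gt0.
move=> N hN.
set t := N %/ d.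
have hN' : N = t * d + N %% d by rewrite /t -divn_eq.
have hr : N %% d < d by rewrite ltn_mod.
have ht : 1 <= t by rewrite /t divn_gt0.
have hc : t <= countR m N.
  have h1 : t <= cnt m (2 ^ m * t) by apply: cnt_lb.
  have h2 := r_le (2 ^ m * t).
  have hd2 : d = (2 ^ m).*2 by rewrite /d expnS mulnC muln2.
  have h3 : (2 ^ m * t).*2 <= N by rewrite hN' hd2; nia.
  have := countR_r m (2 ^ m * t).
  have := @countR_mono' m _ _ (leq_trans h2 h3); lia.
nia.
Qed.
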